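(* Let $\mathcal{A}$ be a deterministic learning algorithm and consider the passive unlearning mechanism $\bar{\mathcal{A}}(U,\mathcal{A}(R\cup U),T(R\cup U))=\mathcal{A}(R\cup U)+\nu$ with $\nu\sim\mathcal{N}(0,\sigma^2 I_d)$ drawn independently at each call, where $\sigma$ may depend on the available information $(U,R\cup U)$ or $(\emptyset,R)$. If $\sigma=\sigma(R)=\frac{\mathrm{RS}_{\mathcal{A}}(R)}{\varepsilon}\sqrt{2\log(1.25/\delta)}$, computed from the retained set $R$, then $(\mathcal{A},\bar{\mathcal{A}})$ satisfies $(\varepsilon,\delta)$-unlearning for every $\varepsilon,\delta\in(0,1)$.
   Context: Datasets are finite subsets of a domain $\mathcal{Z}$; $\mathcal{A}$ maps datasets to $\mathcal{W}\subseteq\mathbb{R}^d$ with Euclidean norm. $\mathrm{RS}_{\mathcal{A}}(R)=\max_{Z\subseteq\mathcal{Z},|Z|=1}\|\mathcal{A}(R\cup Z)-\mathcal{A}(R)\|$. Two random variables $X,Y$ are $(\varepsilon,\delta)$-indistinguishable if for all measurable $W$, $P(X\in W)\le e^\varepsilon P(Y\in W)+\delta$ and symmetrically. The pair $(\mathcal{A},\bar{\mathcal{A}})$ satisfies $(\varepsilon,\delta)$-unlearning if for every dataset $R$ of size $n$ and every forget set $U$ with $|U\cup R|\le n+1$, $\bar{\mathcal{A}}(U,\mathcal{A}(R\cup U),T(R\cup U))$ and $\bar{\mathcal{A}}(\emptyset,\mathcal{A}(R),T(R))$ are $(\varepsilon,\delta)$-indistinguishable; here $T(S)=S$ is full side information.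 *)

(* Defs.v *)
From HB Require Import structures.
From mathcomp Require Import all_boot all_order all_algebra finmap.
From mathcomp Require Import all_classical all_reals all_analysis.
Set Implicit Arguments. Unset Strict Implicit. Unset Printing Implicit Defensive.
Import Order.TTheory GRing.Theory Num.Theory.
Local Open Scope classical_set_scope.
Local Open Scope ring_scope.

(* Vectors of R^d are represented as d.-tuple R, which carries the product
   (= Borel) sigma-algebra of mathcomp-analysis. Datasets are finite sets
   {fset Z} over a domain Z : choiceType. *)

Section Defs.
Context {R : realType}.

Definition vadd d (v w : d.-tuple R) : d.-tuple R :=
  [tuple tnth v i + tnth w i | i < d].
Definition vsub d (v w : d.-tuple R) : d.-tuple R :=
  [tuple tnth v i - tnth w i | i < d].

Definition enorm d (v : d.-tuple R) : R :=
  Num.sqrt (\sum_(i < d) tnth v i ^+ 2).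

(* Replace-one/add-one sensitivity RS_A(R) = max_{z} ||A(R u {z}) - A(R)||,
   taken as the supremum of the (assumed bounded) set of values. *)
Definition RS {Z : choiceType} d (A : {fset Z} -> d.-tuple R) (S : {fset Z}) : R :=
  sup [set enorm (vsub (A (S `|` [fset z])%fset) (A S)) | z in [set: Z]].

Definition RS_bounded {Z : choiceType} d (A : {fset Z} -> d.-tuple R) : Prop :=
  forall S : {fset Z},
    has_ubound [set enorm (vsub (A (S `|` [fset z])%fset) (A S)) | z in [set: Z]].

(* Iterated integral of f : R^d -> \bar R against the product of d copies of
   the one-dimensional centred normal law of standard deviation s > 0,
   i.e. the integral of f against N(0, s^2 I_d). *)
Fixpoint gauss_int (s : R) (d : nat) : (d.-tuple R -> \bar R) -> \bar R :=
  match d return (d.-tuple R -> \bar R) -> \bar R with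
  | 0 => fun f => f [tuple]
  | d'.+1 => fun f =>
      (\int[normal_prob 0 s]_x gauss_int s (fun t : d'.-tuple R => f [tuple of x :: t]))%E
  end.

(* Law of  w + nu,  nu ~ N(0, s^2 I_d)  (point mass at w when s = 0). *)
Definition gauss_out d (w : d.-tuple R) (s : R) (W : set (d.-tuple R)) : \bar R :=
  if s == 0 then (\1_W w)%:E
  else gauss_int s (fun t : d.-tuple R => (\1_W (vadd w t))%:E).

Definition indist d (eps delta : R) (P Q : set (d.-tuple R) -> \bar R) : Prop :=
  forall W : set (d.-tuple R), measurable W ->
    (P W <= (expR eps)%:E * Q W + delta%:E)%E /\
    (Q W <= (expR eps)%:E * P W + delta%:E)%E.

(* (eps,delta)-unlearning for a deterministic algorithm A and an unlearning
   mechanism Abar; Abar U w T returns the law of its (random) output, on input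
   forget set U, model w and side information T (here T(S) = S). *)
Definition unlearning {Z : choiceType} d (n : nat) (A : {fset Z} -> d.-tuple R)
  (Abar : {fset Z} -> d.-tuple R -> {fset Z} -> set (d.-tuple R) -> \bar R)
  (eps delta : R) : Prop :=
  forall Rs U : {fset Z},
    #|` Rs| = n -> (#|` (U `|` Rs)%fset| <= n.+1)%N -> [disjoint Rs & U]%fset ->
    indist eps delta (Abar U (A (Rs `|` U)%fset) (Rs `|` U)%fset) (Abar fset0 (A Rs) Rs).

Definition sigmaR {Z : choiceType} d (A : {fset Z} -> d.-tuple R) (eps delta : R)
  (Rs : {fset Z}) : R :=
  RS A Rs / eps * Num.sqrt (2 * ln ((5 / 4) / delta)).

(* Passive Gaussian unlearning mechanism with sigma computed from the retained
   set (R u U) \ U = R. *)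
Definition passive_gauss {Z : choiceType} d (A : {fset Z} -> d.-tuple R)
  (eps delta : R) (U : {fset Z}) (w : d.-tuple R) (T : {fset Z}) :
  set (d.-tuple R) -> \bar R :=
  gauss_out w (sigmaR A eps delta (T `\` U)%fset).

End Defs.

(* Main.v *)
Require Import Defs.
From HB Require Import structures.
From mathcomp Require Import all_boot all_order all_algebra finmap.
From mathcomp Require Import all_classical all_reals all_analysis.
From mathcomp Require Import measurable_realfun.
From mathcomp Require Import ring lra zify.
Import Order.TTheory GRing.Theory Num.Theory.
Local Open Scope ring_scope.
Local Open Scope classical_set_scope.
Set Implicit Arguments. Unset Strict Implicit. Unset Printing Implicit Defensive.

Section G1a.
Context {R : realType}.
Local Notation mu := (@lebesgue_measure R).

Lemma integral_normal (s : R) (h : R -> \bar R) :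
  measurable_fun [set: R] h -> (forall x, 0 <= h x)%E ->
  (\int[normal_prob 0 s]_x h x = \int[mu]_x (h x * (normal_pdf 0 s x)%:E))%E.
Proof.
move=> mh h0.
rewrite -(Radon_Nikodym_SigmaFinite.change_of_variables (normal_prob_dominates 0 s)) //.
apply: ae_eq_integral => //.
- apply: emeasurable_funM => //.
  apply: (measurable_int mu).
  exact: Radon_Nikodym_SigmaFinite.f_integrable (normal_prob_dominates 0 s).
- apply: emeasurable_funM => //.
  by apply/measurable_EFinP; exact: measurable_normal_pdf.
- apply: ae_eqe_mul2l.
  apply: integral_ae_eq => //.
  + exact: Radon_Nikodym_SigmaFinite.f_integrable (normal_prob_dominates 0 s).
  + by apply/measurable_EFinP; exact: measurable_normal_pdf.
  + move=> E _ mE.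
    by rewrite -Radon_Nikodym_SigmaFinite.f_integral//; exact: normal_prob_dominates.
Qed.

End G1a.

Section G1.
Context {R : realType}.
Local Notation mu := (@lebesgue_measure R).

Lemma measurable_addr (a : R) : measurable_fun [set: R] (fun x : R => x + a).
Proof. by apply: measurable_funD => //; exact: measurable_cst. Qed.

Lemma lebesgue_shift (a : R) (h : R -> \bar R) :
  measurable_fun [set: R] h -> (forall x, 0 <= h x)%E ->
  (\int[mu]_x h (x + a)%R = \int[mu]_x h x)%E.
Proof.
move=> mh h0.
have ma := measurable_addr a.
have E : forall A, measurable A -> mu A = pushforward mu (fun x : R => x + a) A.
  apply: (lebesgue_measure_unique (mu := @measure_function_pushforward__canonical__measure_function_Measure _ _ _ (measurableTypeR R) R mu _ ma)).
  move=> X [[x1 x2] _ <-].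
  change (mu `]x1, x2] = mu ((fun x : R => x + a) @^-1` `]x1, x2])).
  have -> : (fun x : R => x + a) @^-1` `]x1, x2] = `](x1 - a), (x2 - a)]%classic.
    by apply/seteqP; split => x /=; rewrite !in_itv /= ltrBlDr lerBrDr.
  rewrite !lebesgue_measure_itv /= !lte_fin ltrD2r.
  by case: ifP => // _; rewrite -!EFinD; congr (EFin _); ring.
transitivity (\int[@measure_function_pushforward__canonical__measure_function_Measure _ _ _ (measurableTypeR R) R mu _ ma]_x h x)%E; last first.
  by apply: eq_measure_integral => A mA _; exact: (esym (E A mA)).
rewrite ge0_integral_pushforward //.
Qed.
End G1.

Section G2.
Context {R : realType}.

Definition rho1 (s a x : R) : R := expR ((2 * a * x - a ^+ 2) / (s ^+ 2 *+ 2)).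
Definition rhoV (s : R) d (a t : d.-tuple R) : R :=
  expR (\sum_(i < d) (2 * tnth a i * tnth t i - tnth a i ^+ 2) / (s ^+ 2 *+ 2)).

Lemma tnth_cons_behead d (a : d.+1.-tuple R) (i : 'I_d) :
  tnth a (lift ord0 i) = tnth [tuple of behead a] i.
Proof. by rewrite [in LHS](tuple_eta a) tnthS. Qed.

Lemma rhoV_cons s d (a : d.+1.-tuple R) y (t : d.-tuple R) :
  rhoV s a [tuple of y :: t] = rho1 s (thead a) y * rhoV s [tuple of behead a] t.
Proof.
rewrite /rhoV /rho1 -expRD big_ord_recl tnth0; congr (expR (_ + _)).
by apply: eq_bigr => i _; rewrite tnthS tnth_cons_behead.
Qed.

Lemma vadd_cons d (a : d.+1.-tuple R) y (t : d.-tuple R) :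
  vadd a [tuple of y :: t] = [tuple of (thead a + y) :: vadd [tuple of behead a] t].
Proof.
apply: eq_from_tnth => i; case: (unliftP ord0 i) => [j ->|->].
  by rewrite !tnthS !tnth_mktuple tnthS tnth_cons_behead.
by rewrite !tnth0 tnth_mktuple tnth0.
Qed.

Lemma measurable_consl d (y : R) :
  measurable_fun [set: d.-tuple R] (fun t : d.-tuple R => [tuple of y :: t]).
Proof. exact: measurable_cons. Qed.

Lemma measurable_rhoV s d (a : d.-tuple R) :
  measurable_fun [set: d.-tuple R] (rhoV s a).
Proof.
apply: measurableT_comp => //; apply: measurable_sum => i.
apply: measurable_funM => //; apply: measurable_funB => //.
apply: measurable_funM => //; exact: measurable_tnth.
Qed.

Lemma measurable_vadd d (a : d.-tuple R) :
  measurable_fun [set: d.-tuple R] (vadd a).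
Proof.
apply/measurable_fun_tnthP => i /=.
rewrite (_ : _ \o _ = fun t => tnth a i + tnth t i); last first.
  by apply/funext => t /=; rewrite tnth_mktuple.
apply: measurable_funD => //; exact: measurable_tnth.
Qed.

End G2.

Section G3.
Context {R : realType}.
Local Notation mu := (@lebesgue_measure R).

Lemma measurable_rho1 (s a : R) : measurable_fun [set: R] (rho1 s a).
Proof.
apply: measurableT_comp => //; apply: measurable_funM => //.
apply: measurable_funB => //; apply: measurable_funM => //.
Qed.

Lemma normal_shift (s a : R) (h : R -> \bar R) : s != 0 ->
  measurable_fun [set: R] h -> (forall x, 0 <= h x)%E ->
  (\int[normal_prob 0 s]_x h (x + a)%R =
   \int[normal_prob 0 s]_x (h x * (rho1 s a x)%:E))%E.
Proof.
move=> s0 mh h0.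
have ma := measurable_addr a.
rewrite integral_normal//; last first.
  exact: (measurableT_comp mh ma).
rewrite integral_normal//; last 2 first.
- apply: emeasurable_funM => //; apply/measurable_EFinP; exact: measurable_rho1.
- by move=> x; rewrite mule_ge0// lee_fin expR_ge0.
have mpdf := @measurable_normal_pdf R 0 s.
transitivity (\int[mu]_x ((fun y => h y * (normal_pdf 0 s (y - a))%:E) (x + a)%R))%E.
  by apply: eq_integral => x _ /=; rewrite addrK.
rewrite (@lebesgue_shift _ a (fun y : R => h y * (normal_pdf 0 s (y - a)%R)%:E)%E)//; last 2 first.
- apply: emeasurable_funM => //; apply/measurable_EFinP.
  apply: (measurableT_comp mpdf); apply: measurable_funB => //.
- by move=> x; rewrite mule_ge0// lee_fin normal_pdf_ge0.
apply: eq_integral => x _; rewrite -muleA -EFinM; congr (_ * EFin _)%E.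
rewrite /normal_pdf (negbTE s0) /rho1 /normal_fun mulrCA -expRD; congr (_ * expR _).
rewrite !subr0; set K := (s ^+ 2 *+ 2).
ring.
Qed.


Variable s : R.
Local Notation N := (normal_prob (0:R) s).

Lemma gauss_int_ge0 d (f : d.-tuple R -> \bar R) :
  (forall t, 0 <= f t)%E -> (0 <= gauss_int s f)%E.
Proof.
elim: d f => [|d IH] f f0 /=; first exact: f0.
by apply: integral_ge0 => y _; apply: IH => t; exact: f0.
Qed.

Lemma measurable_gauss_int d dX (X : measurableType dX)
    (F : X -> d.-tuple R -> \bar R) :
  measurable_fun [set: X * d.-tuple R] (fun p => F p.1 p.2) ->
  (forall x t, 0 <= F x t)%E ->
  measurable_fun [set: X] (fun x => gauss_int s (F x)).
Proof.
elim: d dX X F => [|d IH] dX X F mF F0 /=.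
  have -> : (fun x => F x [tuple]) =
      (fun p => F p.1 p.2) \o (fun x => (x, [tuple] : 0.-tuple R)) by [].
  apply: measurableT_comp => //.
have mG : measurable_fun [set: X * R]
    (fun p : X * R => gauss_int s (fun t => F p.1 [tuple of p.2 :: t])).
  apply: (IH _ _ (fun (p : X * R) t => F p.1 [tuple of p.2 :: t])); last first.
    by move=> p t; exact: F0.
  have -> : (fun p : (X * R) * d.-tuple R => F p.1.1 [tuple of p.1.2 :: p.2]) =
     (fun p => F p.1 p.2) \o (fun p : (X * R) * d.-tuple R => (p.1.1, [tuple of p.1.2 :: p.2])) by [].
  apply: measurableT_comp => //.
  apply: measurable_fun_pair => /=.
    exact: (measurableT_comp (f := fst) measurable_fst measurable_fst).
  apply: measurable_cons.
    exact: (measurableT_comp (f := snd) measurable_snd measurable_fst).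
  exact: measurable_snd.
exact: (measurable_fun_fubini_tonelli_F (m2 := N) _ mG (fun p => gauss_int_ge0 (fun t => F0 _ _))).
Qed.


Lemma measurable_comp_cons d (f : d.+1.-tuple R -> \bar R) :
  measurable_fun [set: d.+1.-tuple R] f ->
  measurable_fun [set: R * d.-tuple R] (fun p : R * d.-tuple R => f [tuple of p.1 :: p.2]).
Proof.
move=> mf.
have -> : (fun p : R * d.-tuple R => f [tuple of p.1 :: p.2]) =
   f \o (fun p : R * d.-tuple R => [tuple of p.1 :: p.2]) by [].
apply: measurableT_comp => //.
exact: measurable_cons.
Qed.

Lemma measurable_gauss_cons d (f : d.+1.-tuple R -> \bar R) :
  measurable_fun [set: d.+1.-tuple R] f -> (forall t, 0 <= f t)%E ->
  measurable_fun [set: R] (fun y => gauss_int s (fun t : d.-tuple R => f [tuple of y :: t])).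
Proof.
move=> mf f0.
apply: (measurable_gauss_int (F := fun y t => f [tuple of y :: t])) => //.
exact: measurable_comp_cons.
Qed.

Lemma measurable_cons_fun d (f : d.+1.-tuple R -> \bar R) y :
  measurable_fun [set: d.+1.-tuple R] f ->
  measurable_fun [set: d.-tuple R] (fun t => f [tuple of y :: t]).
Proof.
move=> mf.
have -> : (fun t : d.-tuple R => f [tuple of y :: t]) = f \o (fun t : d.-tuple R => [tuple of y :: t]) by [].
apply: measurableT_comp => //; exact: measurable_consl.
Qed.

Lemma gauss_intZ d (f : d.-tuple R -> \bar R) (c : R) : 0 <= c ->
  measurable_fun [set: d.-tuple R] f -> (forall t, 0 <= f t)%E ->
  gauss_int s (fun t => c%:E * f t)%E = (c%:E * gauss_int s f)%E.
Proof.
move=> c0; elim: d f => [|d IH] f mf f0 //=.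
transitivity (\int[N]_y (c%:E * gauss_int s (fun t : d.-tuple R => f [tuple of y :: t])))%E.
  apply: eq_integral => y _.
  by rewrite (IH (fun t => f [tuple of y :: t]))//; exact: measurable_cons_fun.
rewrite ge0_integralZl//.
- exact: measurable_gauss_cons.
- by move=> y _; apply: gauss_int_ge0.
Qed.

Lemma gauss_intD d (f g : d.-tuple R -> \bar R) :
  measurable_fun [set: d.-tuple R] f -> (forall t, 0 <= f t)%E ->
  measurable_fun [set: d.-tuple R] g -> (forall t, 0 <= g t)%E ->
  gauss_int s (fun t => f t + g t)%E = (gauss_int s f + gauss_int s g)%E.
Proof.
elim: d f g => [|d IH] f g mf f0 mg g0 //=.
transitivity (\int[N]_y (gauss_int s (fun t : d.-tuple R => f [tuple of y :: t]) +
                       gauss_int s (fun t : d.-tuple R => g [tuple of y :: t])))%E.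
  apply: eq_integral => y _.
  rewrite (IH (fun t => f [tuple of y :: t]) (fun t => g [tuple of y :: t]))//;
  exact: measurable_cons_fun.
rewrite ge0_integralD//.
- by move=> y _; apply: gauss_int_ge0.
- exact: measurable_gauss_cons.
- by move=> y _; apply: gauss_int_ge0.
- exact: measurable_gauss_cons.
Qed.

Lemma gauss_int_le d (f g : d.-tuple R -> \bar R) :
  measurable_fun [set: d.-tuple R] f -> (forall t, 0 <= f t)%E ->
  measurable_fun [set: d.-tuple R] g -> (forall t, f t <= g t)%E ->
  (gauss_int s f <= gauss_int s g)%E.
Proof.
elim: d f g => [|d IH] f g mf f0 mg fg //=.
apply: ge0_le_integral => //.
- by move=> y _; apply: gauss_int_ge0.
- exact: measurable_gauss_cons.
- apply: measurable_gauss_cons => // t; exact: le_trans (f0 t) (fg t).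
- move=> y _; apply: IH => //; exact: measurable_cons_fun.
Qed.

Lemma gauss_int1 d : gauss_int s (fun _ : d.-tuple R => 1%E) = 1%E.
Proof.
elim: d => [|d IH] //=.
under eq_integral do rewrite IH.
by rewrite integral_cst// mul1e; exact: probability_setT.
Qed.


Lemma gauss_int_shift d (a : d.-tuple R) (f : d.-tuple R -> \bar R) : s != 0 ->
  measurable_fun [set: d.-tuple R] f -> (forall t, 0 <= f t)%E ->
  gauss_int s (fun t => f (vadd a t)) = gauss_int s (fun t => f t * (rhoV s a t)%:E)%E.
Proof.
move=> s0; elim: d a f => [|d IH] a f mf f0 /=.
  by rewrite (tuple0 (vadd a [tuple])) /rhoV big_ord0 expR0 mule1.
set a0 := thead a; set a' := [tuple of behead a].
pose H z := gauss_int s (fun t : d.-tuple R => f [tuple of z :: t] * (rhoV s a' t)%:E)%E.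
have mH : measurable_fun [set: R] H.
  apply: (measurable_gauss_int (F := fun z t => f [tuple of z :: t] * (rhoV s a' t)%:E)%E).
    apply: emeasurable_funM; first exact: measurable_comp_cons.
    apply/measurable_EFinP.
    have -> : (fun p : R * d.-tuple R => rhoV s a' p.2) = rhoV s a' \o snd by [].
    apply: measurableT_comp => //; exact: measurable_rhoV.
  by move=> z t; rewrite mule_ge0// lee_fin expR_ge0.
transitivity (\int[N]_y H (y + a0)%R)%E.
  apply: eq_integral => y _.
  rewrite /H -(IH a' (fun t => f [tuple of (y + a0)%R :: t])); last 2 first.
  - exact: measurable_cons_fun.
  - by move=> t; exact: f0.
  congr (gauss_int s _); apply/funext => t.
  by rewrite vadd_cons addrC.
rewrite (normal_shift a0 s0 mH)//; last first.
  by move=> z; apply: gauss_int_ge0 => t; rewrite mule_ge0// lee_fin expR_ge0.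
apply: eq_integral => y _.
rewrite /H muleC -gauss_intZ//; last 3 first.
- by rewrite expR_ge0.
- apply: emeasurable_funM; first exact: measurable_cons_fun.
  apply/measurable_EFinP; exact: measurable_rhoV.
- by move=> t; rewrite mule_ge0// lee_fin expR_ge0.
congr (gauss_int s _); apply/funext => t.
by rewrite rhoV_cons EFinM muleCA.
Qed.


Lemma gauss_int_rhoV d (b : d.-tuple R) : s != 0 ->
  gauss_int s (fun t => (rhoV s b t)%:E) = 1%E.
Proof.
move=> s0; rewrite -(gauss_int1 d).
have := @gauss_int_shift d b (fun _ => 1%E) s0 (measurable_cst _) (fun _ => lee01).
move=> ->; congr (gauss_int s _); apply/funext => t; by rewrite mul1e.
Qed.

Definition Lsum d (a t : d.-tuple R) : R :=
  \sum_(i < d) (2 * tnth a i * tnth t i - tnth a i ^+ 2) / (s ^+ 2 *+ 2).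

Definition sqn d (a : d.-tuple R) : R := \sum_(i < d) tnth a i ^+ 2.

Lemma core d (w1 w2 : d.-tuple R) (W : set (d.-tuple R)) (eps C lam : R) :
  s != 0 -> measurable W -> 0 <= C ->
  (forall x : R, 1 - expR x <= C * expR (- lam * x)) ->
  (gauss_int s (fun t => (\1_W (vadd w1 t))%:E) <=
   (expR eps)%:E * gauss_int s (fun t => (\1_W (vadd w2 t))%:E) +
   (C * expR (- lam * eps + (lam + lam ^+ 2) * (sqn (vsub w2 w1) / (s ^+ 2 *+ 2))))%:E)%E.
Proof.
move=> s0 mW C0 hpt.
set a := vsub w2 w1.
set g := fun t => (\1_W (vadd w1 t))%:E.
have mg : measurable_fun [set: d.-tuple R] g.
  apply/measurable_EFinP; apply: measurableT_comp; first exact: measurable_indic.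
  exact: measurable_vadd.
have g0 : forall t, (0 <= g t)%E by move=> t; rewrite lee_fin indicE.
have -> : (fun t => (\1_W (vadd w2 t))%:E) = (fun t => g (vadd a t)).
  apply/funext => t; rewrite /g; congr (EFin (\1_W _)).
  apply: eq_from_tnth => i; rewrite !tnth_mktuple; ring.
rewrite gauss_int_shift//.
set K := expR (- lam * eps + (lam + lam ^+ 2) * (sqn a / (s ^+ 2 *+ 2))).
pose b := [tuple - lam * tnth a i | i < d].
pose h := fun t => ((C * K)%:E * (rhoV s b t)%:E)%E.
have mrho : forall c : d.-tuple R, measurable_fun [set: d.-tuple R] (fun t => (rhoV s c t)%:E).
  by move=> c; apply/measurable_EFinP; exact: measurable_rhoV.
have hE : gauss_int s h = (C * K)%:E.
  rewrite /h gauss_intZ//.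
  - by rewrite gauss_int_rhoV// mule1.
  - by rewrite mulr_ge0// expR_ge0.
  - by move=> t; rewrite lee_fin expR_ge0.
rewrite -hE -gauss_intZ//; last 2 first.
- exact: emeasurable_funM.
- by move=> t; rewrite mule_ge0// lee_fin expR_ge0.
rewrite -gauss_intD//; last 4 first.
- apply: emeasurable_funM => //; exact: emeasurable_funM.
- by move=> t; apply: mule_ge0; [rewrite lee_fin expR_ge0 | apply: mule_ge0 => //; rewrite lee_fin expR_ge0].
- exact: emeasurable_funM.
- by move=> t; rewrite /h -EFinM lee_fin mulr_ge0// ?expR_ge0// mulr_ge0// expR_ge0.
apply: gauss_int_le => //.
- apply: emeasurable_funD => //.
    apply: emeasurable_funM => //; exact: emeasurable_funM.
  exact: emeasurable_funM.
move=> t.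
have hpt' := hpt (eps + Lsum a t).
rewrite /g /h indicE; case: (vadd w1 t \in W) => /=; last first.
  by rewrite mul0e mule0 add0e -EFinM lee_fin mulr_ge0// ?expR_ge0// mulr_ge0// expR_ge0.
rewrite mul1e -!EFinM -EFinD lee_fin.
have -> : C * K * rhoV s b t = C * expR (- lam * (eps + Lsum a t)).
  rewrite /K /rhoV -mulrA -expRD; congr (C * expR _).
  rewrite /Lsum /sqn mulr_suml !mulr_sumr mulrDr -addrA -big_split /=; congr (_ + _).
  rewrite mulr_sumr; apply: eq_bigr => i _; rewrite !tnth_mktuple; set K2 := (s ^+ 2 *+ 2); ring.
have -> : expR eps * rhoV s a t = expR (eps + Lsum a t) by rewrite expRD.
lra.
Qed.

End G3.

Section Num.
Context {R : realType}.

Lemma expR15 : expR (1/5 : R) <= 5/4.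
Proof.
have := expR_ge1Dx (- (1/5) : R); rewrite expRN.
set E := expR (1/5 : R) => h.
have E0 : 0 < E by exact: expR_gt0.
have : (1 + - (1/5)) * E <= E^-1 * E by rewrite ler_wpM2r// ltW.
rewrite mulVf ?gt_eqF//; lra.
Qed.

Lemma expR45 : expR (4/5 : R) <= 25/8.
Proof.
have -> : (4/5 : R) = 4%:R * (1/5) by rewrite mulrA mulr1.
rewrite expRM_natl.
have h := expR15; have h0 : 0 <= expR (1/5 : R) := expR_ge0 _.
set E := expR (1/5 : R) in h h0 *.
have : E ^+ 4 <= (5/4) ^+ 4 by rewrite lerXn2r// ?nnegrE//; lra.
lra.
Qed.

Lemma ptA (x : R) : 1 - expR x <= 2/5 * expR (- (1/2) * x).
Proof.
set v := expR (x / 2).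
have v0 : 0 < v by exact: expR_gt0.
have ex : expR x = v ^+ 2.
  by rewrite /v -expRM_natl; congr expR; field.
have ev : expR (- (1/2) * x) = v^-1.
  by rewrite /v -expRN; congr expR; field.
rewrite ex ev.
suff : (1 - v ^+ 2) * v <= 2/5.
  move=> h; rewrite -(@ler_pM2r _ v)//.
  have -> : 2/5 * v^-1 * v = 2/5 by field; rewrite gt_eqF.
  exact: h.
have h1 : 0 <= (v - 4/7) ^+ 2 * (v + 8/7) by rewrite mulr_ge0// ?sqr_ge0//; lra.
nra.
Qed.


Lemma ptB (lam x : R) : 0 < lam -> 1 - expR x <= expR (-1) / lam * expR (- lam * x).
Proof.
move=> l0.
have h1 := expR_ge1Dx x.
have h2 := expR_ge1Dx (- lam * x - 1).
have e : expR (- lam * x - 1) = expR (-1) * expR (- lam * x) by rewrite expRD mulrC.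
rewrite e in h2.
have : lam * (- x) <= expR (-1) * expR (- lam * x).
  by rewrite mulrN -mulNr; lra.
move=> h3.
have : - x <= expR (-1) / lam * expR (- lam * x).
  rewrite -(@ler_pM2l _ lam)//.
  have -> : lam * (expR (-1) / lam * expR (- lam * x)) = expR (-1) * expR (- lam * x).
    by field; rewrite gt_eqF.
  exact: h3.
lra.
Qed.

Lemma numeric (eps L mu : R) : 0 < eps < 1 -> 1/5 <= L -> 0 <= mu ->
  mu * (4 * L) <= eps ^+ 2 ->
  exists C lam, [/\ 0 <= C, (forall x, 1 - expR x <= C * expR (- lam * x)) &
    C * expR (- lam * eps + (lam + lam ^+ 2) * mu) <= 5/4 * expR (- L)].
Proof.
move=> /andP[e0 e1] L5 mu0 hmu.
have L0 : 0 < L by lra.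
case: (leP L (1/2)) => HL.
  exists (2/5), (1/2); split => //; first exact: ptA.
  have hX : - (1/2) * eps + (1/2 + (1/2) ^+ 2) * mu + L <= 4/5.
    have h1 : 0 <= eps * (1 - eps) by rewrite mulr_ge0//; lra.
    have h2 : 0 <= (L - 1/5) * (1/2 - L) by rewrite mulr_ge0//; lra.
    rewrite -(@ler_pM2r _ L)//.
    nra.
  set A := - (1 / 2) * eps + (1 / 2 + (1 / 2) ^+ 2) * mu in hX *.
  have h4 : expR (A + L) <= 25/8.
    apply: le_trans expR45; by rewrite ler_expR.
  have -> : expR A = expR (A + L) * expR (- L) by rewrite -expRD addrK.
  have eL : 0 < expR (- L) := expR_gt0 _.
  nra.
set lam := 2 * L / eps.
have lam0 : 0 < lam by rewrite /lam divr_gt0// mulr_gt0.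
exists (expR (-1) / lam), lam; split.
- by rewrite divr_ge0// ?expR_ge0// ltW.
- by move=> x; exact: ptB.
have hexp : - lam * eps + (lam + lam ^+ 2) * mu <= eps / 2 - L.
  have hm : mu <= eps ^+ 2 / (4 * L).
    by rewrite ler_pdivlMr// ?mulr_gt0//.
  have : (lam + lam ^+ 2) * mu <= (lam + lam ^+ 2) * (eps ^+ 2 / (4 * L)).
    by apply: ler_wpM2l => //; apply: addr_ge0; [exact: ltW | exact: sqr_ge0].
  have -> : (lam + lam ^+ 2) * (eps ^+ 2 / (4 * L)) = eps / 2 + L.
    by rewrite /lam; field; rewrite ?gt_eqF//; lra.
  have -> : - lam * eps = - (2 * L) by rewrite /lam; field; rewrite gt_eqF.
  lra.
have : expR (- lam * eps + (lam + lam ^+ 2) * mu) <= expR (eps / 2 - L) by rewrite ler_expR.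
rewrite expRD => h.
have h2 : expR (-1) * expR (eps / 2) <= 1.
  rewrite -expRD expR_le1; lra.
have hl : 1 / lam <= 1.
  rewrite ler_pdivrMr// mul1r /lam ler_pdivlMr//; lra.
have eL : 0 < expR (- L) := expR_gt0 _.
have e2 : 0 < expR (eps / 2) := expR_gt0 _.
have em : 0 < expR (-1) := expR_gt0 _.
have hC : 0 <= expR (-1) / lam by rewrite divr_ge0// ltW.
apply: (le_trans (ler_wpM2l hC h)); rewrite [expR (eps / 2 - L)]expRD.
have -> : expR (-1) / lam * (expR (eps / 2) * expR (- L)) =
  (1 / lam) * (expR (-1) * expR (eps / 2)) * expR (- L).
  by field; rewrite gt_eqF.
have : (1 / lam) * (expR (-1) * expR (eps / 2)) <= 1.
  have : 0 <= 1 / lam by rewrite divr_ge0// ltW.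
  nra.
move=> h3.
have := ler_wpM2r (ltW eL) h3; lra.
Qed.

End Num.

Section Fin.
Context {R : realType}.

Lemma sqn_ge0 d (a : d.-tuple R) : 0 <= sqn a.
Proof. by apply: sumr_ge0 => i _; exact: sqr_ge0. Qed.

Lemma sqn_vsubC d (v w : d.-tuple R) : sqn (vsub v w) = sqn (vsub w v).
Proof. by apply: eq_bigr => i _; rewrite !tnth_mktuple; ring. Qed.

Lemma enorm_sqn d (a : d.-tuple R) : enorm a ^+ 2 = sqn a.
Proof. by rewrite /enorm sqr_sqrtr// sqn_ge0. Qed.

Lemma vsub_eq0 d (v w : d.-tuple R) : sqn (vsub v w) = 0 -> v = w.
Proof.
move=> h; apply: eq_from_tnth => i.
have := @psumr_eq0P _ _ xpredT (fun i => tnth (vsub v w) i ^+ 2)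
  (fun i _ => sqr_ge0 _) h i isT.
rewrite tnth_mktuple => /eqP; rewrite sqrf_eq0 subr_eq0 => /eqP //.
Qed.

Lemma gauss_out_ge0 d (w : d.-tuple R) s W : (0 <= gauss_out w s W)%E.
Proof.
rewrite /gauss_out; case: ifP => _; first by rewrite lee_fin indicE.
by apply: gauss_int_ge0 => t; rewrite lee_fin indicE.
Qed.

Lemma indist_same d (w : d.-tuple R) s eps delta : 0 <= eps -> 0 <= delta ->
  indist eps delta (gauss_out w s) (gauss_out w s).
Proof.
move=> e0 d0 W mW.
have h : (gauss_out w s W <= (expR eps)%:E * gauss_out w s W + delta%:E)%E.
  apply: le_trans (leeDl _ _); last by rewrite lee_fin.
  by apply: lee_pemull; [exact: gauss_out_ge0 | rewrite lee_fin; apply: le_trans (expR_ge1Dx eps); rewrite lerDl].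
by split.
Qed.


Lemma one_dir d (w1 w2 : d.-tuple R) (s eps delta L : R) (W : set (d.-tuple R)) :
  s != 0 -> measurable W -> 0 < eps < 1 -> 1/5 <= L ->
  delta = 5/4 * expR (- L) ->
  (sqn (vsub w2 w1) / (s ^+ 2 *+ 2)) * (4 * L) <= eps ^+ 2 ->
  (gauss_int s (fun t => (\1_W (vadd w1 t))%:E) <=
   (expR eps)%:E * gauss_int s (fun t => (\1_W (vadd w2 t))%:E) + delta%:E)%E.
Proof.
move=> s0 mW he hL hd hmu.
have mu0 : 0 <= sqn (vsub w2 w1) / (s ^+ 2 *+ 2).
  by rewrite divr_ge0 ?sqn_ge0// mulrn_wge0// sqr_ge0.
have [C [lam [C0 hpt hb]]] := numeric he hL mu0 hmu.
apply: le_trans (core w1 w2 eps s0 mW C0 hpt) _.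
by apply: leeD2l; rewrite lee_fin hd.
Qed.

End Fin.

Local Close Scope classical_set_scope.

Theorem mainTheorem3 (R : realType) (Z : choiceType) (d n : nat)
  (A : {fset Z} -> d.-tuple R) (eps delta : R) :
  RS_bounded A ->
  0 < eps < 1 -> 0 < delta < 1 ->
  unlearning n A (passive_gauss A eps delta) eps delta.
Proof.
move=> hb he hd Rs U hRs hU hdis.
have e0 : 0 < eps by case/andP: he.
have d0 : 0 < delta by case/andP: hd.
have d1 : delta < 1 by case/andP: hd.
rewrite /passive_gauss.
have -> : ((Rs `|` U) `\` U)%fset = Rs.
  by rewrite fsetDUl fsetDv fsetU0; apply/fsetDidPl.
rewrite fsetD0.
set sig := sigmaR A eps delta Rs.
have cU : (#|` U| <= 1)%N.
  have := cardfsUI U Rs.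
  rewrite fsetIC (disjoint_fsetI0 hdis) cardfs0 addn0 hRs => h.
  move: hU; rewrite h; lia.
case: (posnP #|` U|) => [/cardfs0_eq ->|cU0].
  by rewrite fsetU0; apply: indist_same; exact: ltW.
have /cardfs1P [z ->] : #|` U| == 1%N by rewrite eqn_leq cU.
set w1 := A (Rs `|` [fset z])%fset; set w2 := A Rs.
have hN : enorm (vsub w1 w2) <= RS A Rs.
  by apply: (ub_le_sup (hb Rs)); exists z.
have RS0 : 0 <= RS A Rs := le_trans (sqrtr_ge0 _) hN.
have hsq : sqn (vsub w1 w2) <= RS A Rs ^+ 2.
  by rewrite -enorm_sqn; apply: lerXn2r; rewrite ?nnegrE ?sqrtr_ge0.
set L := ln (5/4/delta).
have hpos : 0 < 5/4/delta by rewrite divr_gt0.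
have hL : 1/5 <= L.
  rewrite -ler_expR lnK ?posrE//; apply: le_trans expR15 _.
  rewrite ler_pdivlMr//; lra.
have L0 : 0 < L by lra.
have hdel : delta = 5/4 * expR (- L).
  by rewrite expRN lnK ?posrE//; field; rewrite gt_eqF.
case: (eqVneq (RS A Rs) 0) => RSz.
  have -> : w1 = w2.
    apply: vsub_eq0; apply/eqP; rewrite eq_le sqn_ge0 andbT.
    by move: hsq; rewrite RSz expr0n.
  by apply: indist_same; exact: ltW.
have RSp : 0 < RS A Rs by rewrite lt_neqAle eq_sym RSz RS0.
have sq0 : 0 < Num.sqrt (2 * L) by rewrite sqrtr_gt0 mulr_gt0.
have sigp : 0 < sig by rewrite /sig /sigmaR -/L mulr_gt0// divr_gt0.
have sig0 : sig != 0 by rewrite gt_eqF.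
have hmu : forall v1 v2 : d.-tuple R, sqn (vsub v1 v2) <= RS A Rs ^+ 2 ->
    (sqn (vsub v1 v2) / (sig ^+ 2 *+ 2)) * (4 * L) <= eps ^+ 2.
  move=> v1 v2 hv.
  have sg : 0 < sig ^+ 2 *+ 2 by rewrite mulrn_wgt0// exprn_gt0.
  apply: le_trans (_ : RS A Rs ^+ 2 / (sig ^+ 2 *+ 2) * (4 * L) <= _).
    apply: ler_wpM2r; first by rewrite mulr_ge0// ltW.
    by rewrite ler_pM2r ?invr_gt0.
  rewrite /sig /sigmaR -/L exprMn sqr_sqrtr; last by rewrite mulr_ge0// ltW.
  by rewrite le_eqVlt; apply/orP; left; apply/eqP; field; rewrite !gt_eqF.
move=> W mW; rewrite /gauss_out (negbTE sig0); split.
- apply: (one_dir sig0 mW he hL hdel).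
  by apply: hmu; rewrite sqn_vsubC.
- apply: (one_dir sig0 mW he hL hdel).
  exact: hmu.
Qed.
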